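(* Let $r,K,\mu$ satisfy Assumption 1. There exists a unique $(w,m)\in(0,1)\times(0,K)$ such that $f_w(w,m)=f_m(w,m)=0$.
   Context: Assumption 1: $r\in(1,\infty)$, $\mu\in\left(0,\min\left(\frac r2,1-\frac1r,1-K,K\right)\right)$, $K\in\left(0,\min\left(1,\frac{r}{r-1}\left(1-\frac{\mu}{1-\mu}\right)\right)\right)$. $f_w(w,m):=w(1-(w+m))+\mu(m-w)$, $f_m(w,m):=rm\left(1-\frac{w+m}{K}\right)+\mu(w-m)$. *)

(* Defs.v *)
From Stdlib Require Import Reals.
Open Scope R_scope.

(* Assumption 1 of the paper, with min(a,b,..) unfolded into conjunctions
   of strict upper bounds. *)
Definition assumption1 (r K mu : R) : Prop :=
  1 < r /\
  0 < mu /\ mu < r / 2 /\ mu < 1 - 1 / r /\ mu < 1 - K /\ mu < K /\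
  0 < K /\ K < 1 /\ K < r / (r - 1) * (1 - mu / (1 - mu)).

Definition f_w (mu w m : R) : R := w * (1 - (w + m)) + mu * (m - w).

Definition f_m (r K mu w m : R) : R :=
  r * m * (1 - (w + m) / K) + mu * (w - m).

(* Main.v *)
Require Import Defs.
From Stdlib Require Import Reals Lra Psatz.
Open Scope R_scope.

Definition PP (r K mu w : R) : R :=
  r * (1 - mu - w) * ((K - 1 + 2 * mu) * w - K * mu) + K * mu * (w - mu) * (2 * w - 1).

Lemma PP_cont r K mu : continuity (PP r K mu).
Proof.
  unfold PP. intro x.
  repeat first [apply continuity_pt_plus | apply continuity_pt_mult |
    apply continuity_pt_minus | apply continuity_pt_opp | apply continuity_pt_const; intros ? ? ; reflexivity | apply derivable_continuous_pt, derivable_pt_id].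
Qed.

Lemma key_id r K mu w m : w - mu <> 0 -> m * (w - mu) = w * (1 - mu - w) ->
  K <> 0 ->
  K * (w - mu) ^ 2 * f_m r K mu w m = w * PP r K mu w.
Proof.
  intros HD Hm HK. unfold f_m, PP.
  assert (Hm' : m = w * (1 - mu - w) / (w - mu)) by (apply (Rmult_eq_reg_r (w - mu)); [rewrite Hm; field|]; auto).
  subst m. field. split; auto.
Qed.

Theorem mainTheorem18 (r K mu : R) (H : assumption1 r K mu) :
  exists w m : R,
    (0 < w < 1 /\ 0 < m < K /\ f_w mu w m = 0 /\ f_m r K mu w m = 0) /\
    (forall w' m' : R,
       0 < w' < 1 -> 0 < m' < K -> f_w mu w' m' = 0 -> f_m r K mu w' m' = 0 ->
       w' = w /\ m' = m).
Proof.
  destruct H as (Hr & Hmu & Hmu2 & Hmu3 & Hmu4 & Hmu5 & HK & HK1 & _).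
  assert (Hh : mu < 1/2) by lra.
  assert (Pmu : PP r K mu mu < 0).
  { unfold PP. replace (r * (1 - mu - mu) * ((K - 1 + 2 * mu) * mu - K * mu) +
      K * mu * (mu - mu) * (2 * mu - 1)) with (- (r * mu * ((1 - 2*mu) * (1-2*mu)))) by ring.
    assert (0 < (1-2*mu)*(1-2*mu)) by nra. assert (0 < r * mu) by nra. nra. }
  assert (P1 : 0 < PP r K mu (1 - mu)).
  { unfold PP. replace (r * (1 - mu - (1 - mu)) * ((K - 1 + 2 * mu) * (1 - mu) - K * mu) +
      K * mu * (1 - mu - mu) * (2 * (1 - mu) - 1)) with (K * mu * ((1 - 2*mu) * (1-2*mu))) by ring.
    assert (0 < (1-2*mu)*(1-2*mu)) by nra. assert (0 < K * mu) by nra. nra. }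
  assert (Gen : forall w m, 0 < w < 1 -> 0 < m -> f_w mu w m = 0 -> f_m r K mu w m = 0 ->
     mu < w < 1 - mu /\ m * (w - mu) = w * (1 - mu - w) /\ PP r K mu w = 0).
  { intros w m Hw Hm Hfw Hfm. unfold f_w in Hfw.
    assert (E : m * (w - mu) = w * (1 - mu - w)) by lra.
    assert (mu < w).
    { destruct (Rlt_or_le mu w) as [h|h]; auto. exfalso.
      assert (m * (w - mu) <= 0) by nra. assert (0 < w * (1 - mu - w)) by nra. lra. }
    assert (w < 1 - mu).
    { destruct (Rlt_or_le w (1 - mu)) as [h|h]; auto. exfalso.
      assert (0 < m * (w - mu)) by nra. assert (w * (1 - mu - w) <= 0) by nra. lra. }
    repeat split; try lra; auto.
    pose proof (key_id r K mu w m ltac:(lra) E ltac:(lra)) as KI.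
    rewrite Hfm in KI. assert (w * PP r K mu w = 0) by lra.
    destruct (Rmult_integral _ _ H1); lra. }
  destruct (IVT (PP r K mu) mu (1 - mu) (PP_cont r K mu) ltac:(lra) Pmu P1) as [w0 [[Hw0a Hw0b] Hw0]].
  assert (Hw0a' : mu < w0) by (destruct Hw0a; auto; subst; lra).
  assert (Hw0b' : w0 < 1 - mu) by (destruct Hw0b; auto; subst; lra).
  set (m0 := w0 * (1 - mu - w0) / (w0 - mu)).
  assert (Em0 : m0 * (w0 - mu) = w0 * (1 - mu - w0)) by (unfold m0; field; lra).
  assert (Hm0 : 0 < m0).
  { unfold m0. apply Rdiv_lt_0_compat; [nra|lra]. }
  assert (Hfw0 : f_w mu w0 m0 = 0) by (unfold f_w; lra).
  assert (Hfm0 : f_m r K mu w0 m0 = 0).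
  { pose proof (key_id r K mu w0 m0 ltac:(lra) Em0 ltac:(lra)) as KI.
    rewrite Hw0, Rmult_0_r in KI.
    assert (0 < K * (w0 - mu) ^ 2) by (apply Rmult_lt_0_compat; [lra| apply pow_lt; lra]).
    destruct (Rmult_integral _ _ KI); lra. }
  assert (MK : forall w m, 0 < w < 1 -> 0 < m -> f_m r K mu w m = 0 -> m < K).
  { intros w m Hw Hm Hf. destruct (Rlt_or_le m K) as [h|h]; auto. exfalso.
    unfold f_m in Hf.
    assert (Hq : (w + m) / K = (w + m) * / K) by reflexivity.
    assert (HKi : 0 < / K) by (apply Rinv_0_lt_compat; lra).
    assert (HKK : K * / K = 1) by (field; lra).
    set (q := (w + m) / K) in *.
    assert (Hq1 : 1 + w * / K <= q) by (rewrite Hq; nra).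
    assert (Hwm : w > m).
    { destruct (Rlt_or_le m w) as [h2|h2]; auto. exfalso.
      assert (r * m * (1 - q) < 0).
      { assert (0 < w * / K) by nra. assert (0 < r * m) by nra.
        assert (1 - q < 0) by lra. nra. }
      nra. }
    assert (Hq2 : 2 < q) by (rewrite Hq; assert (w + m > 2*K) by lra; nra).
    assert (0 < r * m) by nra. assert (r * m * (1 - q) < - (r * m)) by nra.
    assert (mu * (w - m) < mu * w) by nra.
    assert (mu * w < mu) by nra.
    nra. }
  exists w0, m0. split.
  - repeat split; try lra; auto.
    apply (MK w0 m0); auto; lra.
  - intros w' m' Hw' Hm' Hfw' Hfm'.
    destruct (Gen w' m' Hw' (proj1 Hm') Hfw' Hfm') as [[Ha Hb] [E' P']].
    assert (Hww : w' = w0).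
    { destruct (Req_dec w' w0) as [e|ne]; auto. exfalso.
      unfold PP in Hw0, P', Pmu, P1.
      set (a := - r * (K - 1 + 2*mu) + 2 * K * mu) in *.
      set (b := r * (1 - mu) * (K - 1 + 2*mu) + r * K * mu - K * mu - 2 * K * mu * mu) in *.
      set (c := - r * (1 - mu) * K * mu + K * mu * mu) in *.
      assert (Q : forall t, r * (1 - mu - t) * ((K - 1 + 2 * mu) * t - K * mu) +
         K * mu * (t - mu) * (2 * t - 1) = a * t * t + b * t + c)
        by (intro t; unfold a, b, c; ring).
      rewrite Q in Hw0, P', Pmu, P1.
      assert (S : a * (w' + w0) + b = 0).
      { assert (Z : (w' - w0) * (a * (w' + w0) + b) = 0) by nra.
        destruct (Rmult_integral _ _ Z); lra. }
      assert (F : forall t, a * t * t + b * t + c = a * (t - w0) * (t - w')).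
      { intro t. assert (c = - a * w0 * w0 - b * w0) by lra. nra. }
      rewrite F in Pmu, P1.
      assert (0 < (mu - w0) * (mu - w')) by nra.
      assert (0 < (1 - mu - w0) * (1 - mu - w')) by nra.
      nra. }
    subst w'. split; auto.
    assert (Z : m' * (w0 - mu) = m0 * (w0 - mu)) by lra.
    apply Rmult_eq_reg_r in Z; lra.
Qed.
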